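(* Let $g\ge3$. The factorization $H(g)=(c_1c_2\cdots c_{2g}c_{2g+1}^2c_{2g}\cdots c_2c_1)^2$ of the identity in $\Gamma_g$ can be transformed by elementary transformations and simultaneous conjugations into a factorization containing, as a subword of consecutive letters, the product $c_3^2c_5^2\cdots c_{2g-1}^2c_{2g+1}^{2g-2}$ (the negative part of the daisy relator $D_{2(g-1)}$); explicitly, $H(g)$ is Hurwitz equivalent up to conjugation to ${}_{\varphi^{-2}}(\bar e_{2g})\cdots{}_{\varphi^{-2}}(\bar e_2)\,{}_{\varphi^{-2}}(d_{2g})\cdots{}_{\varphi^{-2}}(d_2)\,\bar d_2\bar d_4\cdots\bar d_{2g}\,e_2e_4\cdots e_{2g}\,c_1^2c_3^2\cdots c_{2g-1}^2\,c_{2g+1}^{2g+4}$. Hence a $D_{2(g-1)}$-substitution can be applied to it.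
   Context: $\Gamma_g$: mapping class group of closed genus-$g$ surface $\Sigma_g$. $c_1,\dots,c_{2g+1}$: standard chain of nonseparating curves on $\Sigma_g$; letters denote right-handed Dehn twists, ${}_f(x)=t_{f(x)}$. $\varphi=c_{2g+1}^{g+1}c_{2g-1}^{g}\cdots c_3^2c_1$; $d_i={}_{c_{i+1}}(c_i)$, $\bar d_i={}_{c_{i+1}^{-1}}(c_i)$, $e_{i+1}={}_{c_i}(c_{i+1})$, $\bar e_{i+1}={}_{c_i^{-1}}(c_{i+1})$. Daisy relation of type $p$: on a sphere with boundary curves $\delta_0,\dots,\delta_{p+1}$, $t_{\delta_0}^{p-1}t_{\delta_1}\cdots t_{\delta_{p+1}}=t_{x_1}\cdots t_{x_{p+1}}$ for interior curves $x_i$ in the standard daisy configuration ($x_i$ cobounds a pair of pants with $\delta_0,\delta_i$). $D_{2(g-1)}=c_3^{-2}c_5^{-2}\cdots c_{2g-1}^{-2}c_{2g+1}^{-(2g-2)}y_1y_2\cdots y_{2g-1}$ is the daisy relator of type $2(g-1)$ on a sphere with $2g$ holes embedded in $\Sigma_g$ whose central boundary is $c_{2g+1}$ and whose other boundaries are parallel copies of $c_{2g+1},c_{2g-1},\dots,c_3,c_3,\dots,c_{2g-1}$; here $y_1$ is a separating curve cutting off a genus-one subsurface, and $y_{g+1},\dots,y_{2g-1}$ coincide with the curves $x_2,\dots,x_g$ of the type-$(g-1)$ daisy relation $c_{2g+1}^{g-2}c_1c_3\cdots c_{2g-1}=x_1\cdots x_g$. A $D_{2(g-1)}$-substitution replaces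 the subword $c_3^2\cdots c_{2g-1}^2c_{2g+1}^{2g-2}$ by $y_1\cdots y_{2g-1}$. *)

(* Defs.v *)
From Stdlib Require Import Relations.
From mathcomp Require Import all_boot.
Set Implicit Arguments. Unset Strict Implicit. Unset Printing Implicit Defensive.

Record MGroup := {
  carrier :> Type;
  gmul : carrier -> carrier -> carrier;
  gone : carrier;
  ginv : carrier -> carrier;
  gmulA : forall x y z, gmul x (gmul y z) = gmul (gmul x y) z;
  gmul1x : forall x, gmul gone x = x;
  gmulx1 : forall x, gmul x gone = x;
  gmulVx : forall x, gmul (ginv x) x = gone;
  gmulxV : forall x, gmul x (ginv x) = gone
}.

Section GroupOps.
Variable G : MGroup.

Definition gprod (s : seq G) : G := foldr (@gmul G) (@gone G) s.
Definition gexp (x : G) (n : nat) : G := iter n (@gmul G x) (@gone G).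
(* conjugation  _f(x) = f x f^{-1}  (so t_{f(c)} = f t_c f^{-1}) *)
Definition gconj (f x : G) : G := gmul (gmul f x) (ginv f).

Inductive elem_move : seq G -> seq G -> Prop :=
| move_R l1 l2 a b :
    elem_move (l1 ++ a :: b :: l2) (l1 ++ gconj a b :: a :: l2)
| move_L l1 l2 a b :
    elem_move (l1 ++ a :: b :: l2) (l1 ++ b :: gconj (ginv b) a :: l2).

Definition hurwitz_equiv : seq G -> seq G -> Prop :=
  clos_refl_trans (seq G) elem_move.

Definition hurwitz_equiv_conj (s t : seq G) : Prop :=
  exists h : G, hurwitz_equiv s (map (gconj h) t).
End GroupOps.

(* Standard relations satisfied in Gamma_g by the Dehn twists c_1..c_{2g+1}
   about the standard chain of nonseparating curves. *)
Definition chain_relations (G : MGroup) (g : nat) (c : nat -> G) : Prop :=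
  (forall i, 1 <= i <= 2 * g ->
     gmul (gmul (c i) (c i.+1)) (c i) = gmul (gmul (c i.+1) (c i)) (c i.+1))
  /\ (forall i j, 1 <= i -> j <= 2 * g + 1 -> i.+1 < j ->
     gmul (c i) (c j) = gmul (c j) (c i))
  /\ (let hyp := gprod ([seq c i | i <- iota 1 (2 * g + 1)]
                         ++ rev [seq c i | i <- iota 1 (2 * g + 1)]) in
      gmul hyp hyp = gone G
      /\ forall i, 1 <= i <= 2 * g + 1 -> gmul hyp (c i) = gmul (c i) hyp)
  /\ gexp (gprod [seq c i | i <- iota 1 (2 * g + 1)]) (2 * g + 2) = gone G.

Definition Hword (G : MGroup) (g : nat) (c : nat -> G) : seq G :=
  let w := [seq c i | i <- iota 1 (2 * g)] ++ [:: c (2 * g + 1); c (2 * g + 1)]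
           ++ rev [seq c i | i <- iota 1 (2 * g)] in
  w ++ w.

Definition phi (G : MGroup) (g : nat) (c : nat -> G) : G :=
  gmul (gexp (c (2 * g + 1)) g.+1)
       (gprod [seq gexp (c (2 * k - 1)) k | k <- rev (iota 1 g)]).

Definition d_ (G : MGroup) (c : nat -> G) i := gconj (c i.+1) (c i).
Definition dbar (G : MGroup) (c : nat -> G) i := gconj (ginv (c i.+1)) (c i).
Definition e_ (G : MGroup) (c : nat -> G) j := gconj (c j.-1) (c j).
Definition ebar (G : MGroup) (c : nat -> G) j := gconj (ginv (c j.-1)) (c j).

Definition evens (g : nat) : seq nat := [seq 2 * k | k <- iota 1 g].

Definition target_word (G : MGroup) (g : nat) (c : nat -> G) : seq G :=
  let p2 := ginv (gexp (phi g c) 2) in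
  [seq gconj p2 (ebar c j) | j <- rev (evens g)]
  ++ [seq gconj p2 (d_ c j) | j <- rev (evens g)]
  ++ [seq dbar c j | j <- evens g]
  ++ [seq e_ c j | j <- evens g]
  ++ flatten [seq [:: c (2 * k - 1); c (2 * k - 1)] | k <- iota 1 g]
  ++ nseq (2 * g + 4) (c (2 * g + 1)).

Definition daisy_neg_word (G : MGroup) (g : nat) (c : nat -> G) : seq G :=
  flatten [seq [:: c (2 * k + 1); c (2 * k + 1)] | k <- iota 1 (g - 1)]
  ++ nseq (2 * g - 2) (c (2 * g + 1)).

(* Main.v *)
Require Import Defs.
From Stdlib Require Import Relations Permutation.
From mathcomp Require Import all_boot zify.
Set Implicit Arguments. Unset Strict Implicit. Unset Printing Implicit Defensive.

Local Notation "x ** y" := (@gmul _ x y) (at level 40, left associativity).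


Definition gcomm (G : MGroup) (x y : G) := x ** y = y ** x.

Lemma mulKg (G : MGroup) (x y : G) : ginv x ** (x ** y) = y.
Proof. by rewrite gmulA gmulVx gmul1x. Qed.
Lemma mulVKg (G : MGroup) (x y : G) : x ** (ginv x ** y) = y.
Proof. by rewrite gmulA gmulxV gmul1x. Qed.
Lemma mulgK (G : MGroup) (x y : G) : y ** x ** ginv x = y.
Proof. by rewrite -gmulA gmulxV gmulx1. Qed.
Lemma mulgVK (G : MGroup) (x y : G) : y ** ginv x ** x = y.
Proof. by rewrite -gmulA gmulVx gmulx1. Qed.
Lemma inv_uniq (G : MGroup) (x y : G) : x ** y = gone G -> y = ginv x.
Proof. by move=> h; rewrite -[y](mulKg x) h gmulx1. Qed.
Lemma invgK (G : MGroup) (x : G) : ginv (ginv x) = x.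
Proof. by symmetry; apply: inv_uniq; rewrite gmulVx. Qed.
Lemma invMg (G : MGroup) (x y : G) : ginv (x ** y) = ginv y ** ginv x.
Proof.
symmetry; apply: inv_uniq.
by rewrite -gmulA (gmulA y) gmulxV gmul1x gmulxV.
Qed.
Lemma inv1 (G : MGroup) : ginv (gone G) = gone G.
Proof. by symmetry; apply: inv_uniq; rewrite gmul1x. Qed.

Lemma gconj_mul (G : MGroup) (f x y : G) : gconj f (x ** y) = gconj f x ** gconj f y.
Proof. by rewrite /gconj !gmulA mulgVK. Qed.
Lemma gconj_comp (G : MGroup) (f h x : G) : gconj f (gconj h x) = gconj (f ** h) x.
Proof. by rewrite /gconj invMg !gmulA. Qed.
Lemma gconj1 (G : MGroup) (x : G) : gconj (gone G) x = x.
Proof. by rewrite /gconj gmul1x inv1 gmulx1. Qed.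
Lemma gconj_one (G : MGroup) (f : G) : gconj f (gone G) = gone G.
Proof. by rewrite /gconj gmulx1 gmulxV. Qed.
Lemma gconj_inv (G : MGroup) (f x : G) : ginv (gconj f x) = gconj f (ginv x).
Proof. by rewrite /gconj !invMg invgK gmulA. Qed.
Lemma gconjK (G : MGroup) (f x : G) : gconj f (gconj (ginv f) x) = x.
Proof. by rewrite gconj_comp gmulxV gconj1. Qed.
Lemma gconjVK (G : MGroup) (f x : G) : gconj (ginv f) (gconj f x) = x.
Proof. by rewrite gconj_comp gmulVx gconj1. Qed.
Lemma gconj_comm (G : MGroup) (f x : G) : gcomm f x -> gconj f x = x.
Proof. by rewrite /gcomm /gconj => ->; rewrite mulgK. Qed.
Lemma gconj_conj (G : MGroup) (f h x : G) :
  gconj (gconj f h) x = gconj f (gconj h (gconj (ginv f) x)).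
Proof. by rewrite !gconj_comp /gconj !invMg !invgK !gmulA. Qed.

Lemma comm_sym (G : MGroup) (x y : G) : gcomm x y -> gcomm y x.
Proof. by []. Qed.
Lemma comm_refl (G : MGroup) (x : G) : gcomm x x.
Proof. by []. Qed.
Lemma comm1 (G : MGroup) (x : G) : gcomm x (gone G).
Proof. by rewrite /gcomm gmul1x gmulx1. Qed.
Lemma commV (G : MGroup) (x y : G) : gcomm x y -> gcomm x (ginv y).
Proof.
rewrite /gcomm => h.
by rewrite -[ginv y ** x](mulgK y) -(gmulA _ x y) h mulKg.
Qed.
Lemma commM (G : MGroup) (x y z : G) : gcomm x y -> gcomm x z -> gcomm x (y ** z).
Proof. by rewrite /gcomm => h1 h2; rewrite gmulA h1 -gmulA h2 gmulA. Qed.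
Lemma comm_conj (G : MGroup) (x p q : G) : gcomm x p -> gcomm x q -> gcomm x (gconj p q).
Proof. by move=> h1 h2; rewrite /gconj; apply: commM; [apply: commM|apply: commV]. Qed.
Lemma comm_gexp (G : MGroup) (x y : G) n : gcomm x y -> gcomm x (gexp y n).
Proof. by move=> h; elim: n => [|n IH] /=; [apply: comm1|apply: commM]. Qed.

Lemma gprod_cat (G : MGroup) (s t : seq G) : gprod (s ++ t) = gprod s ** gprod t.
Proof. by elim: s => [|x s IH] /=; rewrite ?gmul1x // IH gmulA. Qed.
Lemma gprod_cons (G : MGroup) (x : G) s : gprod (x :: s) = x ** gprod s.
Proof. by []. Qed.
Lemma gprod_map_conj (G : MGroup) (f : G) s :
  gprod (map (gconj f) s) = gconj f (gprod s).
Proof. by elim: s => [|x s IH] /=; rewrite ?gconj_one // IH gconj_mul. Qed.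
Lemma comm_gprod (G : MGroup) (x : G) s :
  List.Forall (gcomm x) s -> gcomm x (gprod s).
Proof.
elim=> [|y t hy _ IH] /=; first exact: comm1.
exact: commM.
Qed.

Lemma gprod_nseq (G : MGroup) (x : G) n : gprod (nseq n x) = gexp x n.
Proof. by elim: n => //= n ->. Qed.

Lemma heq_refl (G : MGroup) (s : seq G) : hurwitz_equiv s s.
Proof. exact: rt_refl. Qed.
Lemma heq_trans (G : MGroup) (s t u : seq G) :
  hurwitz_equiv s t -> hurwitz_equiv t u -> hurwitz_equiv s u.
Proof. exact: rt_trans. Qed.

Lemma elem_cat (G : MGroup) (l1 l2 s t : seq G) :
  elem_move s t -> elem_move (l1 ++ s ++ l2) (l1 ++ t ++ l2).
Proof.
case=> [k1 k2 a b|k1 k2 a b].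
- have -> : l1 ++ (k1 ++ [:: a, b & k2]) ++ l2 = (l1 ++ k1) ++ [:: a, b & k2 ++ l2]
    by rewrite -!catA.
  have -> : l1 ++ (k1 ++ [:: gconj a b, a & k2]) ++ l2 = (l1 ++ k1) ++ [:: gconj a b, a & k2 ++ l2]
    by rewrite -!catA.
  exact: move_R.
- have -> : l1 ++ (k1 ++ [:: a, b & k2]) ++ l2 = (l1 ++ k1) ++ [:: a, b & k2 ++ l2]
    by rewrite -!catA.
  have -> : l1 ++ (k1 ++ [:: b, gconj (ginv b) a & k2]) ++ l2
          = (l1 ++ k1) ++ [:: b, gconj (ginv b) a & k2 ++ l2]
    by rewrite -!catA.
  exact: move_L.
Qed.

Lemma heq_cat (G : MGroup) (l1 l2 s t : seq G) :
  hurwitz_equiv s t -> hurwitz_equiv (l1 ++ s ++ l2) (l1 ++ t ++ l2).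
Proof.
elim=> [x y h|x|x y z _ IH1 _ IH2].
- by apply: rt_step; apply: elem_cat.
- exact: rt_refl.
- exact: rt_trans IH1 IH2.
Qed.

Lemma heq_catl (G : MGroup) (l1 s t : seq G) :
  hurwitz_equiv s t -> hurwitz_equiv (l1 ++ s) (l1 ++ t).
Proof. by move=> h; have := heq_cat l1 [::] h; rewrite !cats0. Qed.
Lemma heq_catr (G : MGroup) (l2 s t : seq G) :
  hurwitz_equiv s t -> hurwitz_equiv (s ++ l2) (t ++ l2).
Proof. by move=> h; have := heq_cat [::] l2 h. Qed.
Lemma heq_cons (G : MGroup) (x : G) (s t : seq G) :
  hurwitz_equiv s t -> hurwitz_equiv (x :: s) (x :: t).
Proof. by move=> h; have := heq_catl [:: x] h. Qed.

Lemma move_right1 (G : MGroup) (x : G) (u : seq G) :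
  hurwitz_equiv (x :: u) (u ++ [:: gconj (ginv (gprod u)) x]).
Proof.
elim: u x => [|a u IH] x /=.
  by rewrite inv1 gconj1; exact: heq_refl.
apply: heq_trans; first by apply: rt_step; exact: (move_L [::] u x a).
rewrite /=; apply: heq_cons; apply: heq_trans (IH _) _.
by rewrite gconj_comp -invMg; exact: heq_refl.
Qed.

Lemma move_left1 (G : MGroup) (x : G) (u : seq G) :
  hurwitz_equiv (u ++ [:: x]) (gconj (gprod u) x :: u).
Proof.
elim: u x => [|a u IH] x /=.
  by rewrite gconj1; exact: heq_refl.
apply: heq_trans; first by apply: heq_cons; exact: IH.
apply: heq_trans; first by apply: rt_step; exact: (move_R [::] u a (gconj (gprod u) x)).
by rewrite /= gconj_comp; exact: heq_refl.
Qed.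

Lemma block_right (G : MGroup) (s u : seq G) :
  hurwitz_equiv (s ++ u) (u ++ map (gconj (ginv (gprod u))) s).
Proof.
elim: s => [|x s IH] /=; first by rewrite cats0; exact: heq_refl.
apply: heq_trans; first by apply: heq_cons; exact: IH.
have := heq_catr (map (gconj (ginv (gprod u))) s) (move_right1 x u).
by rewrite -!catA.
Qed.

Lemma swap2 (G : MGroup) (a b : G) : gcomm a b -> hurwitz_equiv [:: a; b] [:: b; a].
Proof.
move=> h; apply: heq_trans; first by apply: rt_step; exact: (move_R [::] [::] a b).
by rewrite /= gconj_comm //; exact: heq_refl.
Qed.

Lemma comm_right (G : MGroup) (x : G) (u : seq G) :
  List.Forall (gcomm x) u -> hurwitz_equiv (x :: u) (u ++ [:: x]).
Proof.
move=> h; apply: heq_trans (move_right1 x u) _.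
rewrite gconj_comm; first exact: heq_refl.
by apply: comm_sym; apply: commV; apply: comm_gprod.
Qed.

Lemma comm_left (G : MGroup) (x : G) (u : seq G) :
  List.Forall (gcomm x) u -> hurwitz_equiv (u ++ [:: x]) (x :: u).
Proof.
move=> h; apply: heq_trans (move_left1 x u) _.
rewrite gconj_comm; first exact: heq_refl.
by apply: comm_sym; apply: comm_gprod.
Qed.

Lemma elem_prod (G : MGroup) (s t : seq G) : elem_move s t -> gprod s = gprod t.
Proof.
case=> [k1 k2 a b|k1 k2 a b]; rewrite !gprod_cat /=; congr (_ ** _).
  by rewrite /gconj !gmulA mulgVK.
by rewrite /gconj invgK !gmulA gmulxV gmul1x.
Qed.

Lemma heq_prod (G : MGroup) (s t : seq G) : hurwitz_equiv s t -> gprod s = gprod t.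
Proof.
elim=> [x y h|x|x y z _ IH1 _ IH2] //; first exact: elem_prod.
by rewrite IH1.
Qed.

Lemma rot1 (G : MGroup) (x : G) (u : seq G) :
  gprod (x :: u) = gone G -> hurwitz_equiv (x :: u) (u ++ [:: x]).
Proof.
move=> h; apply: heq_trans (move_right1 x u) _.
have e : gprod u = ginv x by apply: inv_uniq; exact: h.
rewrite e invgK /gconj mulgK; exact: heq_refl.
Qed.

Lemma rot_block (G : MGroup) (s u : seq G) :
  gprod (s ++ u) = gone G -> hurwitz_equiv (s ++ u) (u ++ s).
Proof.
elim: s u => [|x s IH] u /= h; first by rewrite cats0; exact: heq_refl.
apply: heq_trans; first by apply: rot1; exact: h.
have -> : u ++ x :: s = (u ++ [:: x]) ++ s by rewrite -catA.
rewrite -catA; apply: IH.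
have hx : x ** gprod (s ++ u) = gone G := h.
rewrite gprod_cat in hx; rewrite !gprod_cat /= gmulx1.
have e : gprod s ** gprod u = ginv x by apply: inv_uniq.
by rewrite gmulA e gmulVx.
Qed.

Lemma perm_heq (G : MGroup) (s t : seq G) :
  (forall a b, List.In a s -> List.In b s -> gcomm a b) ->
  Permutation s t -> hurwitz_equiv s t.
Proof.
move=> H P; elim: P H => [|x l l' _ IH|x y l|l l' l'' P1 IH1 _ IH2] H.
- exact: heq_refl.
- apply: heq_cons; apply: IH => a b ha hb; apply: H; by right.
- have := heq_catr l (swap2 (H y x (or_introl erefl) (or_intror (or_introl erefl)))).
  by [].
- apply: heq_trans (IH1 H) (IH2 _) => a b ha hb.
  apply: H; apply: (Permutation_in _ (Permutation_sym P1)); assumption.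
Qed.

Lemma perm_gprod (G : MGroup) (s t : seq G) :
  (forall a b, List.In a s -> List.In b s -> gcomm a b) ->
  Permutation s t -> gprod s = gprod t.
Proof. by move=> H P; apply: heq_prod; apply: perm_heq. Qed.



Definition BR (G : MGroup) (g : nat) (c : nat -> G) :=
  forall i, 1 <= i <= 2 * g -> c i ** c i.+1 ** c i = c i.+1 ** c i ** c i.+1.
Definition CM (G : MGroup) (g : nat) (c : nat -> G) :=
  forall i j, 1 <= i -> j <= 2 * g + 1 -> i.+1 < j -> c i ** c j = c j ** c i.

Lemma cmm (G : MGroup) g (c : nat -> G) (hm : CM g c) i j :
  1 <= i -> 1 <= j -> i <= 2 * g + 1 -> j <= 2 * g + 1 -> (i.+1 < j) || (j.+1 < i) ->
  gcomm (c i) (c j).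
Proof.
move=> h1 h2 h3 h4 /orP [h|h]; first by apply: hm.
by symmetry; apply: hm.
Qed.

Lemma Forall_map_in (T : eqType) (G : MGroup) (P : G -> Prop) (f : T -> G) (s : seq T) :
  (forall k, k \in s -> P (f k)) -> List.Forall P (map f s).
Proof.
elim: s => [|x s IH] h /=; first by constructor.
constructor; first by apply: h; rewrite inE eqxx.
by apply: IH => k hk; apply: h; rewrite inE hk orbT.
Qed.

Ltac cmm_tac := match goal with H : CM _ _ |- _ => apply: (cmm H) => //; try lia; apply/orP; first [by left; lia | by right; lia] end.

Definition oa (G : MGroup) g (c : nat -> G) := [seq c (2 * k - 1) | k <- iota 1 g.+1].
Definition Dl (G : MGroup) g (c : nat -> G) := [seq dbar c (2 * k) | k <- iota 1 g].
Definition El (G : MGroup) g (c : nat -> G) := [seq e_ c (2 * k) | k <- iota 1 g].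
Definition Er (G : MGroup) g (c : nat -> G) := rev [seq ebar c (2 * k) | k <- iota 1 g].
Definition Dr (G : MGroup) g (c : nat -> G) := rev [seq d_ c (2 * k) | k <- iota 1 g].
Definition Al (G : MGroup) m (c : nat -> G) := [seq c i | i <- iota 1 (2 * m + 1)].

Lemma iota_last a n : iota a n.+1 = iota a n ++ [:: a + n].
Proof. by rewrite -addn1 iotaD. Qed.

Lemma Al_step (G : MGroup) m (c : nat -> G) :
  Al m.+1 c = Al m c ++ [:: c (2 * m.+1); c (2 * m.+1).+1].
Proof.
rewrite /Al; have -> : 2 * m.+1 + 1 = (2 * m + 1) + 2 by lia.
rewrite iotaD map_cat; congr (_ ++ _).
by rewrite /= -[1 + (2 * m + 1)]/((2 * m + 1).+1); congr [:: c _; c _]; lia.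
Qed.

Lemma oa_step (G : MGroup) m (c : nat -> G) :
  oa m.+1 c = oa m c ++ [:: c (2 * m.+1).+1].
Proof.
by rewrite /oa iota_last map_cat; congr (_ ++ [:: c _]); lia.
Qed.

Lemma oa_last (G : MGroup) m (c : nat -> G) :
  oa m c = [seq c (2 * k - 1) | k <- iota 1 m] ++ [:: c (2 * m + 1)].
Proof.
by rewrite /oa iota_last map_cat; congr (_ ++ [:: c _]); lia.
Qed.

Lemma formA1 (G : MGroup) g (c : nat -> G) (hm : CM g c) m :
  m <= g -> hurwitz_equiv (Al m c) (oa m c ++ Dl m c).
Proof.
elim: m => [|m IH] hmg; first by exact: heq_refl.
rewrite Al_step oa_step.
have eD : Dl m.+1 c = Dl m c ++ [:: dbar c (2 * m.+1)] by rewrite /Dl iota_last map_cat.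
rewrite eD.
apply: heq_trans; first by apply: heq_catr; apply: IH; lia.
apply: heq_trans; first by apply: rt_step;
  apply: (move_L (oa m c ++ Dl m c) [::] (c (2*m.+1)) (c (2*m.+1).+1)).
rewrite -!catA; apply: (heq_catl (oa m c)).
have := heq_catr [:: dbar c (2 * m.+1)] (comm_left (x := c (2*m.+1).+1) (u := Dl m c) _).
rewrite -catA; apply.
apply: Forall_map_in => k; rewrite mem_iota => hk.
rewrite /dbar; apply: comm_conj; [apply: commV|]; cmm_tac.
Qed.

Lemma formA2 (G : MGroup) g (c : nat -> G) (hm : CM g c) m :
  m <= g -> hurwitz_equiv (Al m c) (El m c ++ oa m c).
Proof.
elim: m => [|m IH] hmg; first by exact: heq_refl.
have eE : El m.+1 c = El m c ++ [:: e_ c (2 * m.+1)] by rewrite /El iota_last map_cat.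
have ez : e_ c (2*m.+1) = gconj (c (2*m+1)) (c (2*m.+1)).
  by rewrite /e_; congr (gconj (c _) _); lia.
rewrite Al_step oa_step eE ez.
apply: heq_trans; first by apply: heq_catr; apply: IH; lia.
rewrite oa_last -!catA; apply: (heq_catl (El m c)).
set oa' := [seq c (2 * k - 1) | k <- iota 1 m].
apply: heq_trans; first by apply: rt_step;
  apply: (move_R oa' [:: c (2 * m.+1).+1] (c (2 * m + 1)) (c (2 * m.+1))).
have := heq_catr [:: c (2 * m + 1); c (2 * m.+1).+1]
  (comm_left (x := gconj (c (2 * m + 1)) (c (2 * m.+1))) (u := oa') _).
rewrite -catA; apply.
apply: Forall_map_in => k; rewrite mem_iota => hk.
apply: comm_sym; apply: comm_conj; cmm_tac.
Qed.

Lemma rev_oa (G : MGroup) m (c : nat -> G) :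
  rev (oa m c) = c (2 * m + 1) :: rev [seq c (2 * k - 1) | k <- iota 1 m].
Proof. by rewrite oa_last rev_cat. Qed.

Lemma formB1 (G : MGroup) g (c : nat -> G) (hm : CM g c) m :
  m <= g -> hurwitz_equiv (rev (Al m c)) (rev (oa m c) ++ Er m c).
Proof.
elim: m => [|m IH] hmg; first by exact: heq_refl.
have eE : Er m.+1 c = ebar c (2 * m.+1) :: Er m c.
  by rewrite /Er iota_last map_cat rev_cat.
have ez : ebar c (2*m.+1) = gconj (ginv (c (2*m+1))) (c (2*m.+1)).
  by rewrite /ebar; congr (gconj (ginv (c _)) _); lia.
rewrite Al_step rev_cat eE ez.
have -> : rev [:: c (2 * m.+1); c (2 * m.+1).+1] = [:: c (2 * m.+1).+1; c (2 * m.+1)] by [].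
apply: heq_trans; first by apply: heq_catl; apply: IH; lia.
rewrite oa_step rev_cat rev_oa.
set oa' := rev [seq c (2 * k - 1) | k <- iota 1 m].
have -> : rev [:: c (2 * m.+1).+1] = [:: c (2 * m.+1).+1] by [].
rewrite /= -/oa'.
apply: heq_cons.
apply: heq_trans; first by apply: rt_step;
  apply: (move_L [::] (oa' ++ Er m c) (c (2 * m.+1)) (c (2 * m + 1))).
rewrite /=; apply: heq_cons.
have := heq_catr (Er m c)
  (comm_right (x := gconj (ginv (c (2 * m + 1))) (c (2 * m.+1))) (u := oa') _).
rewrite -catA; apply.
rewrite /oa' -map_rev; apply: Forall_map_in => k; rewrite mem_rev mem_iota => hk.
apply: comm_sym; apply: comm_conj; [apply: commV|]; cmm_tac.
Qed.

Lemma formB2 (G : MGroup) g (c : nat -> G) (hm : CM g c) m :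
  m <= g -> hurwitz_equiv (rev (Al m c)) (Dr m c ++ rev (oa m c)).
Proof.
elim: m => [|m IH] hmg; first by exact: heq_refl.
have eD : Dr m.+1 c = d_ c (2 * m.+1) :: Dr m c.
  by rewrite /Dr iota_last map_cat rev_cat.
rewrite Al_step rev_cat eD.
have -> : rev [:: c (2 * m.+1); c (2 * m.+1).+1] = [:: c (2 * m.+1).+1; c (2 * m.+1)] by [].
apply: heq_trans; first by apply: heq_catl; apply: IH; lia.
rewrite oa_step rev_cat.
have -> : rev [:: c (2 * m.+1).+1] = [:: c (2 * m.+1).+1] by [].
apply: heq_trans; first by apply: rt_step;
  apply: (move_R [::] (Dr m c ++ rev (oa m c)) (c (2 * m.+1).+1) (c (2 * m.+1))).
rewrite /=; apply: heq_cons.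
have := heq_catr (rev (oa m c)) (comm_right (x := c (2 * m.+1).+1) (u := Dr m c) _).
rewrite -catA; apply.
rewrite /Dr -map_rev; apply: Forall_map_in => k; rewrite mem_rev mem_iota => hk.
rewrite /= /d_; apply: comm_conj; cmm_tac.
Qed.

Definition bm (G : MGroup) (c : nat -> G) m := gprod (rev [seq c i | i <- iota 1 m]).

Lemma bm_step (G : MGroup) (c : nat -> G) m : bm c m.+1 = c m.+1 ** bm c m.
Proof. by rewrite /bm iota_last map_cat rev_cat. Qed.

Lemma bm_comm (G : MGroup) g (c : nat -> G) (hm : CM g c) m j :
  1 <= j <= 2 * g + 1 -> m.+1 < j -> gcomm (c j) (bm c m).
Proof.
move=> hj hmj; apply: comm_gprod; rewrite -map_rev; apply: Forall_map_in => k.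
rewrite mem_rev mem_iota => hk; cmm_tac.
Qed.

Lemma bm_shift (G : MGroup) g (c : nat -> G) (hb : BR g c) (hm : CM g c) m :
  m <= 2 * g + 1 -> forall i, 1 <= i < m -> bm c m ** c i.+1 = c i ** bm c m.
Proof.
elim: m => [|m IH] hmg i hi; first by lia.
rewrite bm_step.
case: (ltnP i m) => him.
  rewrite -gmulA IH; [|lia|lia].
  rewrite !gmulA; congr (_ ** _).
  have : gcomm (c i) (c m.+1) by cmm_tac.
  by [].
have eim : i = m by lia.
subst i.
case: m IH hmg hi him => [|m] IH hmg hi him; first by lia.
rewrite bm_step.
have hc : gcomm (c m.+2) (bm c m) by apply: (bm_comm hm); lia.
rewrite -!gmulA -hc !gmulA.
have hbr := hb m.+1 ltac:(lia).
rewrite hbr.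
by rewrite -!gmulA.
Qed.

Lemma conj_of_eq (G : MGroup) (x y x' : G) : x ** y = y ** x' -> gconj (ginv y) x = x'.
Proof. by move=> h; rewrite /gconj invgK -gmulA h mulKg. Qed.

Lemma y_shift (G : MGroup) g (c : nat -> G) (hb : BR g c) (hm : CM g c) j :
  1 <= j <= g ->
  gconj (ginv (gprod (Er g c ++ Dr g c))) (c (2 * j - 1)) = c (2 * j + 1).
Proof.
move=> hj.
set b := gprod (rev (Al g c)).
set o := gprod (rev (oa g c)).
have h1 : b = o ** gprod (Er g c) by rewrite /b (heq_prod (formB1 hm (leqnn g))) gprod_cat.
have h2 : b = gprod (Dr g c) ** o by rewrite /b (heq_prod (formB2 hm (leqnn g))) gprod_cat.
have eE : gprod (Er g c) = ginv o ** b by rewrite h1 mulKg.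
have eD : gprod (Dr g c) = b ** ginv o by rewrite h2 mulgK.
have hbb : b = bm c (2 * g + 1) by [].
have hoc : forall i, 1 <= i <= g.+1 -> gcomm o (c (2 * i - 1)).
  move=> i hi; apply: comm_sym; apply: comm_gprod; rewrite /oa -map_rev.
  apply: Forall_map_in => k; rewrite mem_rev mem_iota => hk.
  case: (eqVneq i k) => [->|hik]; first exact: comm_refl.
  cmm_tac.
apply: conj_of_eq; rewrite gprod_cat eE eD.
have s1 : c (2 * j - 1) ** ginv o = ginv o ** c (2 * j - 1).
  by apply: commV; apply: comm_sym; apply: hoc; lia.
have s4 : c (2 * j + 1) ** ginv o = ginv o ** c (2 * j + 1).
  apply: commV; apply: comm_sym.
  have -> : 2 * j + 1 = 2 * j.+1 - 1 by lia.
  by apply: hoc; lia.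
have s2 : c (2 * j - 1) ** b = b ** c (2 * j).
  rewrite hbb; have -> : c (2 * j) = c (2 * j - 1).+1 by congr c; lia.
  by symmetry; apply: (bm_shift hb hm) => //; lia.
have s3 : c (2 * j) ** b = b ** c (2 * j + 1).
  rewrite hbb; have -> : c (2 * j + 1) = c (2 * j).+1 by congr c; lia.
  by symmetry; apply: (bm_shift hb hm) => //; lia.
rewrite !gmulA s1 -(gmulA (ginv o) (c (2 * j - 1)) b) s2 gmulA.
rewrite -(gmulA (ginv o ** b) (c (2 * j)) b) s3 gmulA.
by rewrite -(gmulA (ginv o ** b ** b) (c (2 * j + 1)) (ginv o)) s4 !gmulA.
Qed.

Definition Yw (G : MGroup) g (c : nat -> G) := Er g c ++ Dr g c.
Definition Ym (G : MGroup) g (c : nat -> G) m := map (gconj (ginv m)) (Yw g c).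
Definition OC (G : MGroup) g (c : nat -> G) m :=
  forall k, 1 <= k <= g.+1 -> gcomm m (c (2 * k - 1)).
Definition Sk (G : MGroup) g (c : nat -> G) k := gprod [seq c (2 * i - 1) | i <- iota k (g.+2 - k)].

Lemma ce_comm (G : MGroup) g (c : nat -> G) (hm : CM g c) i j :
  1 <= i <= g.+1 -> 1 <= j <= g.+1 -> gcomm (c (2 * i - 1)) (c (2 * j - 1)).
Proof.
move=> hi hj; case: (eqVneq i j) => [->|hij]; first exact: comm_refl.
cmm_tac.
Qed.

Lemma OC_mul (G : MGroup) g (c : nat -> G) (hm : CM g c) m j :
  OC g c m -> 1 <= j <= g.+1 -> OC g c (m ** c (2 * j - 1)).
Proof.
move=> h hj k hk; apply: comm_sym; apply: commM; first by apply: comm_sym; apply: h.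
exact: (ce_comm hm).
Qed.

Lemma Sk_step (G : MGroup) g (c : nat -> G) k : k <= g.+1 -> Sk g c k = c (2 * k - 1) ** Sk g c k.+1.
Proof. by move=> hk; rewrite /Sk; have -> : g.+2 - k = (g.+2 - k.+1).+1 by lia. Qed.

Lemma OC_Sk (G : MGroup) g (c : nat -> G) (hm : CM g c) m k :
  OC g c m -> 1 <= k -> OC g c (m ** Sk g c k).
Proof.
move=> h hk j hj; apply: comm_sym; apply: commM; first by apply: comm_sym; apply: h.
apply: comm_gprod; apply: Forall_map_in => i; rewrite mem_iota => hi.
apply: (ce_comm hm) => //; lia.
Qed.

Lemma Ym_block (G : MGroup) g (c : nat -> G) m x :
  hurwitz_equiv (Ym g c m ++ [:: x]) (x :: Ym g c (m ** x)).
Proof.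
apply: heq_trans; first exact: block_right.
rewrite /Ym -map_comp /=.
have -> : [seq (gconj (ginv (x ** gone G)) \o gconj (ginv m)) i | i <- Yw g c]
          = map (gconj (ginv (m ** x))) (Yw g c).
  by apply: eq_map => z /=; rewrite gconj_comp gmulx1 -invMg.
exact: heq_refl.
Qed.

Lemma shift1 (G : MGroup) g (c : nat -> G) (hb : BR g c) (hm : CM g c) m j :
  1 <= j <= g -> OC g c m ->
  hurwitz_equiv (Ym g c m ++ [:: c (2 * j - 1)]) (Ym g c (m ** c (2 * j - 1)) ++ [:: c (2 * j + 1)]).
Proof.
move=> hj hO.
apply: heq_trans; first exact: Ym_block.
apply: heq_trans; first exact: move_right1.
set x := c (2 * j - 1).
have hx : gcomm (m ** x) x.
  apply: comm_sym; apply: commM; [apply: comm_sym; apply: hO; lia|exact: comm_refl].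
rewrite /Ym gprod_map_conj gconj_inv gconj_conj invgK (gconj_comm hx) (y_shift hb hm) //.
rewrite gconj_comm; first exact: heq_refl.
apply: comm_sym; apply: commV; apply: commM.
  apply: comm_sym; have -> : 2 * j + 1 = 2 * j.+1 - 1 by lia.
  by apply: hO; lia.
have -> : 2 * j + 1 = 2 * j.+1 - 1 by lia.
by apply: (ce_comm hm); lia.
Qed.

Lemma proc_letter0 (G : MGroup) g (c : nat -> G) (hb : BR g c) (hm : CM g c) d m :
  d <= g -> OC g c m ->
  hurwitz_equiv (Ym g c m ++ [:: c (2 * (g.+1 - d) - 1)])
                (c (2 * g + 1) :: Ym g c (m ** Sk g c (g.+1 - d))).
Proof.
elim: d m => [|d IH] m hd hO.
  rewrite subn0.
  have -> : Sk g c g.+1 = c (2 * g.+1 - 1) ** gone G.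
    by rewrite /Sk; have -> : g.+2 - g.+1 = 1 by lia.
  rewrite gmulx1.
  have -> : c (2 * g + 1) = c (2 * g.+1 - 1) by congr c; lia.
  exact: Ym_block.
set k := g.+1 - d.+1.
have hk : 1 <= k <= g by rewrite /k; lia.
have e1 : c (2 * k - 1) = c (2 * k - 1) by [].
apply: heq_trans; first by apply: (shift1 hb hm).
have -> : c (2 * k + 1) = c (2 * (g.+1 - d) - 1) by congr c; rewrite /k; lia.
apply: heq_trans; first apply: IH; [lia| apply: (OC_mul hm) => //; lia |].
rewrite (@Sk_step G g c k); last by lia.
have -> : k.+1 = g.+1 - d by rewrite /k; lia.
by rewrite gmulA; exact: heq_refl.
Qed.

Lemma proc_letter (G : MGroup) g (c : nat -> G) (hb : BR g c) (hm : CM g c) k m :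
  1 <= k <= g.+1 -> OC g c m ->
  hurwitz_equiv (Ym g c m ++ [:: c (2 * k - 1)]) (c (2 * g + 1) :: Ym g c (m ** Sk g c k)).
Proof.
move=> hk hO.
have := proc_letter0 hb hm (d := g.+1 - k) (m := m) ltac:(lia) hO.
by have -> : g.+1 - (g.+1 - k) = k by lia.
Qed.

Lemma proc_list (G : MGroup) g (c : nat -> G) (hb : BR g c) (hm : CM g c) L m :
  (forall k, k \in L -> 1 <= k <= g.+1) -> OC g c m ->
  hurwitz_equiv (Ym g c m ++ [seq c (2 * k - 1) | k <- L])
                (nseq (size L) (c (2 * g + 1)) ++ Ym g c (m ** gprod [seq Sk g c k | k <- L])).
Proof.
elim: L m => [|k L IH] m hL hO /=.
  by rewrite cats0 gmulx1; exact: heq_refl.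
have hk : 1 <= k <= g.+1 by apply: hL; rewrite inE eqxx.
have -> : Ym g c m ++ c (2 * k - 1) :: [seq c (2 * k0 - 1) | k0 <- L]
        = (Ym g c m ++ [:: c (2 * k - 1)]) ++ [seq c (2 * k0 - 1) | k0 <- L] by rewrite -catA.
apply: heq_trans; first by apply: heq_catr; apply: (proc_letter hb hm).
rewrite /=; apply: heq_cons.
rewrite gmulA; apply: IH.
  by move=> i hi; apply: hL; rewrite inE hi orbT.
by apply: (OC_Sk hm) => //; lia.
Qed.



Lemma perm_Perm (T : eqType) (s t : seq T) : perm_eq s t -> Permutation s t.
Proof.
elim: s t => [|x s IH] t h.
  by case: t h => // y t /perm_size.
have xt : x \in t by rewrite -(perm_mem h) inE eqxx.
move: h; case/splitPr: xt => t1 t2 h.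
have h' : perm_eq s (t1 ++ t2).
  rewrite -(perm_cons x); apply: (perm_trans h).
  by rewrite -cat1s perm_catCA.
apply: (@Permutation_cons_app _ s t1 t2 x); exact: IH.
Qed.

Lemma Perm_map (A B : Type) (f : A -> B) (s t : seq A) :
  Permutation s t -> Permutation (map f s) (map f t).
Proof.
elim=> [|x l l' _ IH|x y l|l l' l'' _ IH1 _ IH2] /=.
- by constructor.
- by constructor.
- by constructor.
- exact: Permutation_trans IH1 IH2.
Qed.

Lemma In_map_inv (A B : Type) (f : A -> B) (s : seq A) b :
  List.In b (map f s) -> exists a, List.In a s /\ b = f a.
Proof.
elim: s => [|x s IH] /=; first by [].
case=> [<-|h]; first by exists x; split => //; left.
by case: (IH h) => a [ha ->]; exists a; split => //; simpl; right.
Qed.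

Lemma In_mem (T : eqType) (s : seq T) x : List.In x s -> x \in s.
Proof.
elim: s => [|y s IH] /=; first by [].
case=> [->|h]; first by rewrite inE eqxx.
by rewrite inE (IH h) orbT.
Qed.

Lemma all_flatten' (T : eqType) (a : pred T) (ss : seq (seq T)) :
  all a (flatten ss) = all (all a) ss.
Proof. by elim: ss => [|s ss IH] //=; rewrite all_cat IH. Qed.

Lemma gprod_flatten (G : MGroup) (ss : seq (seq G)) :
  gprod (flatten ss) = gprod (map (@gprod G) ss).
Proof. by elim: ss => [|s ss IH] //=; rewrite gprod_cat IH. Qed.

Lemma odd_perm_gprod (G : MGroup) g (c : nat -> G) (hm : CM g c) (s t : seq nat) :
  all (fun k => 0 < k <= g.+1) s -> perm_eq s t ->
  gprod [seq c (2 * k - 1) | k <- s] = gprod [seq c (2 * k - 1) | k <- t].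
Proof.
move=> hs hp; apply: perm_gprod; last by apply: Perm_map; apply: perm_Perm.
move=> a b ha hb; case: (In_map_inv ha) => i [hi ->]; case: (In_map_inv hb) => j [hj ->].
move/allP: hs => hs.
have := hs i (In_mem hi); have := hs j (In_mem hj) => /= h1 h2.
by apply: (ce_comm hm); lia.
Qed.

Lemma odd_perm_heq (G : MGroup) g (c : nat -> G) (hm : CM g c) (s t : seq nat) :
  all (fun k => 0 < k <= g.+1) s -> perm_eq s t ->
  hurwitz_equiv [seq c (2 * k - 1) | k <- s] [seq c (2 * k - 1) | k <- t].
Proof.
move=> hs hp; apply: perm_heq; last by apply: Perm_map; apply: perm_Perm.
move=> a b ha hb; case: (In_map_inv ha) => i [hi ->]; case: (In_map_inv hb) => j [hj ->].
move/allP: hs => hs.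
have := hs i (In_mem hi); have := hs j (In_mem hj) => /= h1 h2.
by apply: (ce_comm hm); lia.
Qed.

Lemma count_iota_mem x a n : count_mem x (iota a n) = (a <= x < a + n).
Proof. by rewrite count_uniq_mem ?iota_uniq // mem_iota. Qed.

Lemma count_le_iota x n : count (fun k => k <= x) (iota 1 n) = minn x n.
Proof.
elim: n => [|n IH]; first by rewrite minn0.
rewrite iota_last count_cat IH /=.
case: (leqP (1 + n) x) => h /=; lia.
Qed.

Lemma sumn_nseqk x (s : seq nat) : uniq s ->
  count_mem x (flatten [seq nseq k k | k <- s]) = (x \in s) * x.
Proof.
elim: s => [|k s IH] //= /andP [ks us].
rewrite count_cat IH // count_nseq in_cons.
case: (eqVneq k x) => [<-|hkx].
  by rewrite /= eqxx (negPf ks) /=; lia.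
by rewrite /= (negPf hkx) /=; lia.
Qed.

Lemma count_pairs x (s : seq nat) :
  count_mem x (flatten [seq [:: k; k] | k <- s]) = 2 * count_mem x s.
Proof. elim: s => [|k s IH] //=; rewrite IH; case: (k == x) => /=; lia. Qed.

Definition PL g := nseq g.+1 g.+1 ++ flatten [seq nseq k k | k <- rev (iota 1 g)].
Definition LL g := flatten [seq iota k (g.+2 - k) | k <- rev (iota 1 g.+1) ++ iota 1 g.+1].

Arguments PL g : simpl never.
Arguments LL g : simpl never.

Lemma count_PL g x : count_mem x (PL g) = (g.+1 == x) * g.+1 + (1 <= x < 1 + g) * x.
Proof.
rewrite /PL count_cat count_nseq sumn_nseqk ?rev_uniq ?iota_uniq // mem_rev mem_iota.
by [].
Qed.

Lemma count_LL g x : count_mem x (LL g) = 2 * ((x < g.+2) * minn x g.+1).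
Proof.
rewrite /LL count_flatten -map_comp.
have -> : [seq (count_mem x \o (fun k => iota k (g.+2 - k))) i | i <- rev (iota 1 g.+1) ++ iota 1 g.+1]
        = [seq nat_of_bool ((fun k => (k <= x) && (x < g.+2)) i) | i <- rev (iota 1 g.+1) ++ iota 1 g.+1].
  apply/eq_in_map => k; rewrite mem_cat mem_rev orbb mem_iota => hk /=.
  by rewrite count_iota_mem; have -> : k + (g.+2 - k) = g.+2 by lia.
rewrite sumn_count count_cat count_rev.
case: (ltnP x g.+2) => hx.
  have -> : count (fun i => (i <= x) && true) (iota 1 g.+1) = count (fun i => i <= x) (iota 1 g.+1).
    by apply: eq_count => k; rewrite andbT.
  by rewrite count_le_iota /=; lia.
have -> : count (fun i => (i <= x) && false) (iota 1 g.+1) = 0.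
  by rewrite (eq_count (a2 := pred0)) ?count_pred0 // => k; rewrite andbF.
by [].
Qed.

Lemma perm_phi g : perm_eq (PL g ++ PL g) (LL g).
Proof.
apply/allP => x _; apply/eqP.
rewrite count_cat count_PL count_LL.
case: (posnP x) => [->|x0]; first by rewrite /= !muln0 ?min0n; lia.
case: (ltngtP x g.+1) => h; rewrite /=; case: (ltnP x g.+2) => h2 /=; lia.
Qed.

Lemma perm7 g : perm_eq (iota 1 g.+1 ++ rev (iota 1 g.+1) ++ nseq (2 * g + 2) g.+1)
                        (flatten [seq [:: k; k] | k <- iota 1 g] ++ nseq (2 * g + 4) g.+1).
Proof.
apply/allP => x _; apply/eqP.
rewrite !count_cat count_pairs count_rev !count_iota_mem !count_nseq.
case hb1 : (1 <= x < 1 + g.+1); case hb2 : (1 <= x < 1 + g); case hb3 : (pred1 x g.+1) => /=;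
  move: hb1 hb2 hb3 => /= hb1 hb2 hb3; lia.
Qed.



Lemma heq_app (G : MGroup) (s s' t t' : seq G) :
  hurwitz_equiv s s' -> hurwitz_equiv t t' -> hurwitz_equiv (s ++ t) (s' ++ t').
Proof. by move=> h1 h2; apply: heq_trans (heq_catr t h1) (heq_catl s' h2). Qed.

Lemma Hword_eq (G : MGroup) g (c : nat -> G) :
  Hword g c = (Al g c ++ rev (Al g c)) ++ (Al g c ++ rev (Al g c)).
Proof.
rewrite /Hword /Al; have -> : 2 * g + 1 = (2 * g).+1 by lia.
rewrite iota_last map_cat rev_cat /=.
have -> : 1 + 2 * g = (2 * g).+1 by lia.
by rewrite -!catA.
Qed.

Lemma phi_eq (G : MGroup) g (c : nat -> G) (hm : CM g c) :
  gprod [seq Sk g c k | k <- rev (iota 1 g.+1) ++ iota 1 g.+1] = gexp (phi g c) 2.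
Proof.
have e1 : gprod [seq Sk g c k | k <- rev (iota 1 g.+1) ++ iota 1 g.+1]
        = gprod [seq c (2 * k - 1) | k <- LL g].
  rewrite /LL map_flatten gprod_flatten -!map_comp; congr gprod.
have e2 : phi g c = gprod [seq c (2 * k - 1) | k <- PL g].
  rewrite /phi /PL map_cat gprod_cat map_nseq gprod_nseq.
  have -> : c (2 * g.+1 - 1) = c (2 * g + 1) by congr c; lia.
  congr (_ ** _).
  rewrite map_flatten gprod_flatten -!map_comp; congr gprod.
  by apply: eq_map => k /=; rewrite map_nseq gprod_nseq.
have e3 : gexp (phi g c) 2 = gprod [seq c (2 * k - 1) | k <- PL g ++ PL g].
  by rewrite map_cat gprod_cat -e2 /= gmulx1.
rewrite e1 e3; symmetry; apply: (odd_perm_gprod hm); last exact: perm_phi.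
rewrite all_cat andbb /PL all_cat all_nseq leqnn /= all_flatten' all_map.
apply/allP => k; rewrite mem_rev mem_iota => hk /=.
rewrite all_nseq; apply/orP; right; lia.
Qed.

Lemma map_conj_fix (G : MGroup) (h : G) (c : nat -> G) (l : seq nat) :
  (forall i, i \in l -> gcomm h (c i)) -> map (gconj h) (map c l) = map c l.
Proof.
move=> H; rewrite -map_comp; apply/eq_in_map => i hi /=.
by apply: gconj_comm; apply: H.
Qed.

Theorem main_heq (g : nat) (hg : 3 <= g) (G : MGroup) (c : nat -> G)
  (hc : chain_relations g c) :
  hurwitz_equiv (Hword g c) (target_word g c).
Proof.
case: hc => hb [hm [hh _]].
move: hh => /= [hhyp hcomm].
have hbr : BR g c := hb.
have hcm : CM g c := hm.
set A := Al g c.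
have hP : gprod (Hword g c) = gone G by rewrite Hword_eq gprod_cat.
have s1 : hurwitz_equiv (Hword g c) (A ++ A ++ rev A ++ rev A).
  rewrite Hword_eq -!catA; apply: heq_catl.
  have := block_right (rev A) (A ++ rev A).
  have -> : map (gconj (ginv (gprod (A ++ rev A)))) (rev A) = rev A.
    rewrite /A /Al -map_rev; apply: map_conj_fix => i; rewrite mem_rev mem_iota => hi.
    apply: comm_sym; apply: commV; apply: comm_sym; rewrite map_rev; exact: (hcomm i ltac:(lia)).
  by rewrite -!catA; apply.
set oa' := oa g c; set D1 := Dl g c; set E1 := El g c; set ER := Er g c; set DR := Dr g c.
have s2 : hurwitz_equiv (A ++ A ++ rev A ++ rev A)
   ((oa' ++ D1) ++ (E1 ++ oa') ++ (rev oa' ++ ER) ++ (DR ++ rev oa')).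
  apply: heq_app; first exact: (formA1 hcm (leqnn g)).
  apply: heq_app; first exact: (formA2 hcm (leqnn g)).
  by apply: heq_app; [exact: (formB1 hcm (leqnn g)) | exact: (formB2 hcm (leqnn g))].
have h12 := heq_trans s1 s2.
have s3 : hurwitz_equiv ((oa' ++ D1) ++ (E1 ++ oa') ++ (rev oa' ++ ER) ++ (DR ++ rev oa'))
                        (D1 ++ E1 ++ oa' ++ rev oa' ++ (ER ++ DR) ++ (rev oa' ++ oa')).
  have -> : (oa' ++ D1) ++ (E1 ++ oa') ++ (rev oa' ++ ER) ++ (DR ++ rev oa')
          = oa' ++ (D1 ++ E1 ++ oa' ++ rev oa' ++ ER ++ DR ++ rev oa') by rewrite -!catA.
  apply: heq_trans; first apply: rot_block.
    by move: (heq_prod h12); rewrite hP -!catA => <-.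
  by rewrite -!catA; exact: heq_refl.
have h13 := heq_trans h12 s3.
set M := gexp (phi g c) 2.
set F := map (gconj (ginv M)) (ER ++ DR).
have sQ : hurwitz_equiv ((ER ++ DR) ++ (rev oa' ++ oa')) (nseq (2 * g + 2) (c (2 * g + 1)) ++ F).
  have eL : rev oa' ++ oa' = [seq c (2 * k - 1) | k <- rev (iota 1 g.+1) ++ iota 1 g.+1].
    by rewrite map_cat map_rev.
  have eY : ER ++ DR = Ym g c (gone G).
    rewrite /Ym inv1; symmetry; rewrite (eq_map (g := id)) ?map_id // => z; exact: gconj1.
  rewrite eL eY.
  have := proc_list hbr hcm (L := rev (iota 1 g.+1) ++ iota 1 g.+1) (m := gone G) _ _.
  rewrite gmul1x (phi_eq hcm) size_cat size_rev size_iota.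
  have -> : g.+1 + g.+1 = 2 * g + 2 by lia.
  apply.
    by move=> k; rewrite mem_cat mem_rev orbb mem_iota => hk; lia.
  by move=> k hk; apply: comm_sym; exact: comm1.
have s4 := heq_catl (D1 ++ E1 ++ oa' ++ rev oa') sQ.
rewrite -!catA in s4.
rewrite -!catA in h13.
have h14 := heq_trans h13 s4.
have s5 : hurwitz_equiv (D1 ++ E1 ++ oa' ++ rev oa' ++ nseq (2 * g + 2) (c (2 * g + 1)) ++ F)
                        (F ++ D1 ++ E1 ++ oa' ++ rev oa' ++ nseq (2 * g + 2) (c (2 * g + 1))).
  have := rot_block (s := D1 ++ E1 ++ oa' ++ rev oa' ++ nseq (2 * g + 2) (c (2 * g + 1))) (u := F).
  rewrite -!catA; apply.
  by move: (heq_prod h14); rewrite hP -?catA => <-.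
have h15 := heq_trans h14 s5.
apply: heq_trans h15 _.
have eT : target_word g c = F ++ D1 ++ E1 ++
   (flatten [seq [:: c (2 * k - 1); c (2 * k - 1)] | k <- iota 1 g] ++ nseq (2 * g + 4) (c (2 * g + 1))).
  rewrite /target_word /F map_cat /ER /DR /Er /Dr !map_rev /evens -!map_comp /D1 /E1 /Dl /El -!catA.
  by [].
rewrite eT; apply: heq_catl; apply: heq_catl; apply: heq_catl.
have := odd_perm_heq hcm (s := iota 1 g.+1 ++ rev (iota 1 g.+1) ++ nseq (2 * g + 2) g.+1)
   (t := flatten [seq [:: k; k] | k <- iota 1 g] ++ nseq (2 * g + 4) g.+1) _ (perm7 g).
have ec : c (2 * g.+1 - 1) = c (2 * g + 1) by congr c; lia.
rewrite !map_cat map_rev !map_nseq ec map_flatten -map_comp.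
apply.
have hi : all (fun k : nat => 0 < k <= g.+1) (iota 1 g.+1).
  by apply/allP => k; rewrite mem_iota => hk /=; lia.
by rewrite !all_cat all_rev hi all_nseq /= leqnn orbT.
Qed.

Lemma daisy_key (G : MGroup) g (c : nat -> G) : 3 <= g ->
  flatten [seq [:: c (2 * k - 1); c (2 * k - 1)] | k <- iota 1 g] ++ nseq (2 * g + 4) (c (2 * g + 1))
  = [:: c 1; c 1] ++ daisy_neg_word g c ++ nseq 6 (c (2 * g + 1)).
Proof.
move=> hg.
have e : g = (g - 1).+1 by lia.
have -> : iota 1 g = 1 :: iota 2 (g - 1) by rewrite {1}e.
have -> : iota 2 (g - 1) = map (addn 1) (iota 1 (g - 1)) by rewrite -iotaDl.
have -> : nseq (2 * g + 4) (c (2 * g + 1)) = nseq (2 * g - 2) (c (2 * g + 1)) ++ nseq 6 (c (2 * g + 1)).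
  by rewrite -nseqD; congr nseq; lia.
rewrite /daisy_neg_word /= -catA -map_comp.
congr [:: _, _ & flatten _ ++ _].
apply: eq_map => k /=.
by have -> : 2 * (1 + k) - 1 = 2 * k + 1 by lia.
Qed.

Unset Implicit Arguments.

Theorem theorem4p7 (g : nat) (hg : 3 <= g) (G : MGroup) (c : nat -> G)
  (hc : chain_relations g c) :
  hurwitz_equiv_conj (Hword g c) (target_word g c)
  /\ exists l1 l2 : seq G, target_word g c = l1 ++ daisy_neg_word g c ++ l2.
Proof.
split.
  exists (gone G).
  have -> : map (gconj (gone G)) (target_word g c) = target_word g c.
    by rewrite (eq_map (g := id)) ?map_id // => z; exact: gconj1.
  exact: main_heq.
rewrite /target_word (daisy_key c hg).
move: (daisy_neg_word g c) => D.
by eexists; eexists; rewrite !catA; reflexivity.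
Qed.
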